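(* Let $0\le p<1$, let $n,k$ be integers with $1\le k\le n$, and let $\mathcal C_0\subseteq\{0,1\}^n$ be a binary linear maximum distance separable (MDS) code of length $n$ and dimension $n-k$. Consider the coset wiretap coding scheme in which the $2^k$ messages $m\in\mathcal M$ (with $M$ uniform on $\mathcal M$, $|\mathcal M|=2^k$) are put in bijection with the $2^k$ cosets $\mathcal C_0(\mathbf m)$ of $\mathcal C_0$ in $\{0,1\}^n$, and to send message $m$ the encoder transmits a codeword $\mathbf X$ chosen uniformly at random from the coset $\mathcal C_0(\mathbf m)$. Let $\mathbf Z\in\{0,1,2\}^n$ be the eavesdropper's output when $\mathbf X$ is sent over $n$ independent uses of a binary erasure channel with erasure probability $p$. Then \[ d_{TV}\bigl(P_{M,\mathbf Z},\,\mathrm U_{\mathcal M}P_{\mathbf Z}\bigr)\;=\;\sum_{e=0}^{k-1}\Bigl(1-\frac{1}{2^{\,k-e}}\Bigr)\binom{n}{e}p^e(1-p)^{n-e}. \]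
   Context: The binary erasure channel with erasure probability $p$ maps input $x\in\{0,1\}$ to output $x$ with probability $1-p$ and to the erasure symbol $2$ with probability $p$, independently across the $n$ uses. An $[n,n-k]$ linear code is MDS if its minimum Hamming distance equals $k+1$. $d_{TV}(P,Q)=\tfrac12\sum_x|P(x)-Q(x)|$ denotes total variation distance, and $\mathrm U_{\mathcal M}$ is the uniform distribution on $\mathcal M$. *)

(* Defs.v *)
From HB Require Import structures.
From mathcomp Require Import all_boot all_order all_algebra.
Set Implicit Arguments. Unset Strict Implicit. Unset Printing Implicit Defensive.
Import Order.TTheory GRing.Theory Num.Theory.
Local Open Scope ring_scope.

Notation word n := 'rV['F_2]_n.

Definition hamming_dist n (x y : word n) : nat :=
  #|[set i : 'I_n | x 0 i != y 0 i]|.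

(* Minimum Hamming distance of a code C: minimum over pairs of distinct
   codewords (convention: n+1 if C has fewer than two codewords). *)
Definition min_dist n (C : {vspace word n}) : nat :=
  \big[minn/n.+1]_(x : word n | x \in C)
    \big[minn/n.+1]_(y : word n | (y \in C) && (y != x)) hamming_dist x y.

Definition is_MDS n k (C : {vspace word n}) : Prop :=
  (\dim C = n - k)%N /\ min_dist C = k.+1.

Definition coset n (C : {vspace word n}) (x : word n) : {set word n} :=
  [set y : word n | y - x \in C].

(* Eavesdropper output alphabet {0,1,2}; 2 is the erasure symbol. *)
Notation out n := {ffun 'I_n -> 'I_3}.

Definition bec {R : ringType} (p : R) (b : 'F_2) (z : 'I_3) : R :=
  if val z == 2%N then p
  else if val z == val b then 1 - p else 0.

Definition becn {R : ringType} n (p : R) (x : word n) (z : out n) : R :=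
  \prod_(i < n) bec p (x 0 i) (z i).

(* Joint law of (M, Z) for the coset scheme: M uniform on 'I_(2^k),
   X uniform on the coset of the representative enc m, Z = BEC^n(X). *)
Definition P_MZ {R : fieldType} n k (p : R) (C : {vspace word n})
    (enc : 'I_(2 ^ k) -> word n) (m : 'I_(2 ^ k)) (z : out n) : R :=
  (2 ^ k)%:R^-1 *
  \sum_(x in coset C (enc m)) (#|coset C (enc m)|%:R^-1 * becn p x z).

Definition P_Z {R : fieldType} n k (p : R) (C : {vspace word n})
    (enc : 'I_(2 ^ k) -> word n) (z : out n) : R :=
  \sum_(m : 'I_(2 ^ k)) P_MZ p C enc m z.

Definition dTV_secrecy {R : realFieldType} n k (p : R) (C : {vspace word n})
    (enc : 'I_(2 ^ k) -> word n) : R :=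
  2^-1 * \sum_(m : 'I_(2 ^ k)) \sum_(z : out n)
     `|P_MZ p C enc m z - (2 ^ k)%:R^-1 * P_Z p C enc z|.

(* Main.v *)
Require Import Defs.
From HB Require Import structures.
From mathcomp Require Import all_boot all_order all_algebra.
From mathcomp Require Import ring lra.
Import Order.TTheory GRing.Theory Num.Theory.
Set Implicit Arguments. Unset Strict Implicit. Unset Printing Implicit Defensive.
Local Open Scope ring_scope.


Lemma prod_if (R : comRingType) n (P : pred 'I_n) (a b : R) :
  \prod_(i < n) (if P i then a else b) =
  a ^+ #|[set i | P i]| * b ^+ (n - #|[set i | P i]|).
Proof.
rewrite (bigID P) /=.
rewrite (eq_bigr (P := P) (fun=> a)); last by move=> i ->.
rewrite (eq_bigr (P := predC P) (fun=> b)); last by move=> i Hi; rewrite (negbTE Hi).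
rewrite !prodr_const; congr (_ * _).
  by apply: congr1; apply: eq_card => i; rewrite inE.
congr (_ ^+ _); have H := cardsC [set i | P i]; rewrite card_ord in H.
apply: (@addnI #|[set i | P i]|); rewrite subnKC; last first.
  by rewrite -[X in (_ <= X)%N]H leq_addr.
rewrite -[RHS]H; congr addn; apply: eq_card => i; rewrite !inE; last by [].
Qed.

Lemma card_words n (Q : 'I_n -> pred 'F_2) :
  #|[set x : word n | [forall i, Q i (x 0%R i)]]| = (\prod_(i < n) #|Q i|)%N.
Proof.
rewrite -sum1_card.
have -> : (\sum_(x in [set x : word n | [forall i, Q i (x 0%R i)]]) 1 =
           \sum_(x : word n) \prod_(i < n) (Q i (x 0%R i) : nat))%N.
  rewrite big_mkcond /=; apply: eq_bigr => x _; rewrite inE.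
  case: forallP => [H|H].
    by rewrite big1 // => i _; rewrite H.
  have [i Hi] : exists i, ~~ Q i (x 0%R i).
    apply/existsP; rewrite -negb_forall; exact/forallP.
  by rewrite (bigD1 i) //= (negbTE Hi).
rewrite (reindex (fun f : {ffun 'I_n -> 'F_2} => \row_i f i)) /=; last first.
  exists (fun x : word n => [ffun i => x 0%R i]) => [f _|x _].
    by apply/ffunP => i; rewrite ffunE mxE.
  by apply/rowP => i; rewrite mxE ffunE.
under eq_bigr do under eq_bigr do rewrite mxE.
rewrite [RHS](eq_bigr (fun i => \sum_(b : 'F_2) (Q i b : nat))%N); last first.
  by move=> i _; rewrite -sum1_card big_mkcond.
by rewrite bigA_distr_bigA.
Qed.


Lemma card_coset n (C : {vspace word n}) (a : word n) :
  #|coset C a| = #|[set x : word n | x \in C]|.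
Proof.
have -> : coset C a = [set x + a | x in [set x : word n | x \in C]].
  apply/setP => y; rewrite inE; apply/idP/imsetP => [H|[x]].
    by exists (y - a); rewrite ?inE ?subrK.
  by rewrite inE => Hx ->; rewrite addrK.
by apply: card_imset; apply: addIr.
Qed.

Lemma coset_partition n k (C : {vspace word n}) (enc : 'I_(2 ^ k) -> word n)
  (Hu : forall x : word n, exists! m : 'I_(2 ^ k), x \in coset C (enc m))
  (P : pred (word n)) :
  (\sum_(m : 'I_(2 ^ k)) #|[set x in coset C (enc m) | P x]|)%N =
  #|[set x | P x]|.
Proof.
have E1 : forall x, (\sum_(m : 'I_(2 ^ k)) (x \in coset C (enc m) : nat))%N = 1%N.
  move=> x; have [m [Hm Hu']] := Hu x.
  rewrite (bigD1 m) //= Hm big1 // => m' Hm'.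
  case Hx: (x \in coset C (enc m')) => //.
  by move: Hm'; rewrite (Hu' m' Hx) eqxx.
transitivity (\sum_(m : 'I_(2 ^ k)) \sum_x ((x \in coset C (enc m)) && P x : nat))%N.
  apply: eq_bigr => m _; rewrite -sum1_card big_mkcond /=.
  by apply: eq_bigr => x _; rewrite inE.
rewrite exchange_big /= -sum1_card [RHS]big_mkcond /=; apply: eq_bigr => x _.
rewrite inE; case: (P x).
  by under eq_bigr do rewrite andbT; rewrite E1.
by rewrite big1 // => m _; rewrite andbF.
Qed.

Lemma bigmin_le (I : eqType) (r : seq I) (P : pred I) (F : I -> nat) (d : nat) j :
  j \in r -> P j -> (\big[minn/d]_(i <- r | P i) F i <= F j)%N.
Proof.
move=> + HP; elim: r => // a r IH; rewrite inE big_cons => /orP [/eqP|/IH H].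
  by move=> <-; rewrite HP geq_minl.
by case: (P a) => //; exact: leq_trans (geq_minr _ _) H.
Qed.

Lemma mds_weight n k (C : {vspace word n}) (y : word n) :
  is_MDS k C -> y \in C -> y != 0 -> (k < #|[set i | y 0%R i != 0%R]|)%N.
Proof.
move=> [_ Hd] Hy Hy0.
have : (min_dist C <= hamming_dist y 0)%N.
  rewrite /min_dist.
  apply: leq_trans (bigmin_le _ _ (mem_index_enum y) Hy) _.
  apply: (bigmin_le _ _ (mem_index_enum 0)).
  by rewrite rpred0 eq_sym Hy0.
rewrite Hd /hamming_dist => H; apply: leq_trans H _.
by apply: subset_leq_card; apply/subsetP => i; rewrite !inE mxE.
Qed.

Lemma subset_card n (E : {set 'I_n}) d :
  (d <= #|E|)%N -> exists T : {set 'I_n}, T \subset E /\ #|T| = d.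
Proof.
move=> Hd; exists [set i in take d (enum E)]; split.
  by apply/subsetP => i; rewrite inE => /mem_take; rewrite mem_enum.
rewrite cardsE (card_uniqP _) ?size_take ?take_uniq ?enum_uniq //.
by rewrite -cardE; case: ltnP => // H; apply/eqP; rewrite eqn_leq H Hd.
Qed.


Definition erased n (z : out n) : {set 'I_n} := [set i | val (z i) == 2%N].
Definition agree n (z : out n) (x : word n) : bool :=
  [forall i, (val (z i) != 2%N) ==> (val (z i) == val (x 0 i))].
Definition wz (R : ringType) n (p : R) (z : out n) : R :=
  \prod_(i < n) (if val (z i) == 2%N then p else 1 - p).

Lemma prod_nat_if n (P : pred 'I_n) a :
  (\prod_(i < n) (if P i then a else 1) = a ^ #|[set i | P i]|)%N.
Proof.
rewrite -big_mkcond /= -prod_nat_const; apply: eq_bigl => i; by rewrite inE.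
Qed.

Lemma becn_eq (R : comRingType) n (p : R) (x : word n) (z : out n) :
  becn p x z = wz p z * (agree z x)%:R.
Proof.
rewrite /becn /wz; case: (boolP (agree z x)) => H.
  rewrite mulr1; apply: eq_bigr => i _; rewrite /bec.
  case: ifP => // Hz; move/forallP: H => /(_ i); rewrite Hz /= => /eqP ->.
  by rewrite eqxx.
have [i Hi] : exists i, ~~ ((val (z i) != 2%N) ==> (val (z i) == val (x 0 i))).
  by apply/existsP; rewrite -negb_forall.
rewrite mulr0 (bigD1 i) //= /bec; move: Hi; rewrite negb_imply.
by case/andP => /negbTE -> /negbTE ->; rewrite mul0r.
Qed.

Lemma card_agree n (z : out n) : #|[set x | agree z x]| = (2 ^ #|erased z|)%N.
Proof.
pose Q i := [pred b : 'F_2 | (val (z i) != 2%N) ==> (val (z i) == val b)].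
have -> : [set x | agree z x] = [set x : word n | [forall i, Q i (x 0%R i)]].
  by apply/setP => x; rewrite !inE.
rewrite (card_words Q) -prod_nat_if; apply: eq_bigr => i _.
rewrite /Q; case: (z i) => [[|[|[|j]]] Hj] //=.
- apply: (@eq_card1 _ (0 : 'F_2)) => b; rewrite !inE.
  by case: b => [[|[|b]] Hb].
- apply: (@eq_card1 _ (1 : 'F_2)) => b; rewrite !inE.
  by case: b => [[|[|b]] Hb].
- by rewrite cardT /= -cardE card_Fp.
Qed.


Definition Kset n (C : {vspace word n}) (E : {set 'I_n}) : {set word n} :=
  [set y | (y \in C) && [forall i, (i \notin E) ==> (y 0 i == 0)]].

Lemma a_le_K n (C : {vspace word n}) (a : word n) (z : out n) :
  (#|[set x in coset C a | agree z x]| <= #|Kset C (erased z)|)%N.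
Proof.
set A := [set x in coset C a | agree z x].
have [->|[x0 Hx0]] := set_0Vmem A; first by rewrite cards0.
have Hinj : {in A &, injective (fun x => x - x0)}.
  by move=> x y _ _; apply: addIr.
rewrite -(card_in_imset Hinj); apply: subset_leq_card.
apply/subsetP => y /imsetP [x Hx ->].
move: Hx Hx0; rewrite !inE => /andP[Hx Ax] /andP[Hx0 Ax0]; apply/andP; split.
  have -> : x - x0 = (x - a) - (x0 - a) by rewrite opprB addrA subrK.
  by rewrite rpredB.
apply/forallP => i; apply/implyP; rewrite !inE => Hi.
move/forallP: Ax => /(_ i); move/forallP: Ax0 => /(_ i).
rewrite Hi /= => /eqP H1 /eqP H2.
by rewrite !mxE subr_eq0; apply/eqP/val_inj; rewrite /= -H1 -H2.
Qed.

Lemma K_bound n k (C : {vspace word n}) (E : {set 'I_n}) :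
  is_MDS k C -> (#|Kset C E| <= 2 ^ (#|E| - k))%N.
Proof.
move=> HM.
have [T [HTE HT]] := subset_card (leq_subr k #|E|).
pose g (y : word n) : word n := \row_i (if i \in T then y 0 i else 0).
have Hinj : {in Kset C E &, injective g}.
  move=> y1 y2; rewrite !inE => /andP[Hy1 Ey1] /andP[Hy2 Ey2] Hg.
  apply/eqP; rewrite -subr_eq0; apply/negPn/negP => Hd.
  have := mds_weight HM (rpredB Hy1 Hy2) Hd.
  have Hsub : [set i | (y1 - y2) 0%R i != 0%R] \subset E :\: T.
    apply/subsetP => i; rewrite !inE !mxE subr_eq0 => Hne.
    apply/andP; split.
      apply/negP => HiT; move: Hne; have := congr1 (fun v : word n => v 0 i) Hg.
      by rewrite /g !mxE HiT => ->; rewrite eqxx.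
    apply/negPn/negP => HiE; move/forallP: Ey1 => /(_ i); move/forallP: Ey2 => /(_ i).
    by rewrite HiE /= => /eqP H2' /eqP H1'; rewrite H1' H2' eqxx in Hne.
  have := subset_leq_card Hsub; rewrite cardsD (setIidPr HTE) HT => H1 H2.
  have : (k < #|E| - (#|E| - k))%N := leq_trans H2 H1.
  by rewrite ltnNge leq_subLR addnC -leq_subLR leqnn.
rewrite -(card_in_imset Hinj).
pose Q (i : 'I_n) := if i \in T then [pred b : 'F_2 | true] else pred1 (0 : 'F_2).
apply: (@leq_trans #|[set x : word n | [forall i, Q i (x 0%R i)]]|).
  apply: subset_leq_card; apply/subsetP => y /imsetP [x _ ->]; rewrite inE.
  apply/forallP => i; rewrite /Q /g mxE; case: (i \in T) => //=.
rewrite (card_words Q) (eq_bigr (fun i => if i \in T then 2 else 1)%N); last first.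
  move=> i _; rewrite /Q; case: (i \in T).
    by rewrite cardT /= -cardE card_Fp.
  exact: card1.
rewrite prod_nat_if -HT (_ : [set i | i \in T] = T) //.
by apply/setP => i; rewrite inE.
Qed.


Lemma all_eq_nat k e (a : 'I_(2 ^ k) -> nat) K :
  (k <= e)%N -> (\sum_m a m)%N = (2 ^ e)%N -> (forall m, a m <= K)%N ->
  (K <= 2 ^ (e - k))%N -> forall m, a m = (2 ^ (e - k))%N.
Proof.
move=> Hke Hs Ha HK.
have Ha' : forall m, (a m <= 2 ^ (e - k))%N by move=> m; exact: leq_trans (Ha m) HK.
have : (\sum_m (2 ^ (e - k) - a m) == 0)%N.
  rewrite sumnB; last by move=> m _; exact: Ha'.
  rewrite Hs sum_nat_const card_ord -expnD subnKC // subnn //.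
rewrite sum_nat_eq0 => /forallP H m; apply/eqP; rewrite eqn_leq Ha' /=.
by rewrite -subn_eq0; exact: H m.
Qed.

Lemma r_eq (R : realFieldType) k e : (e <= k)%N ->
  (2 ^ k)%:R^-1 * (2 ^ e)%:R = (2 ^ (k - e))%:R^-1 :> R.
Proof.
move=> Hek; have -> : (2 ^ k)%N = (2 ^ (k - e) * 2 ^ e)%N by rewrite -expnD subnK.
by rewrite natrM invfM mulfVK // pnatr_eq0 expn_eq0.
Qed.

Lemma sum_dist (R : realFieldType) k e (a : 'I_(2 ^ k) -> nat) K :
  (\sum_m a m)%N = (2 ^ e)%N -> (forall m, a m <= K)%N -> (K <= 2 ^ (e - k))%N ->
  \sum_m `|(a m)%:R - (2 ^ k)%:R^-1 * (2 ^ e)%:R| =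
  (if (e < k)%N then 2 * (2 ^ e)%:R * (1 - (2 ^ (k - e))%:R^-1) else 0 : R).
Proof.
move=> Hs Ha HK; case: ltnP => Hek.
- have HK1 : (K <= 1)%N by move: HK; rewrite (eqP (ltnW Hek)) /subn /=.
  set r := (2 ^ (k - e))%:R^-1 : R.
  have Hr : (2 ^ k)%:R^-1 * (2 ^ e)%:R = r by rewrite r_eq // ltnW.
  have H2k : (2 ^ k)%:R * r = (2 ^ e)%:R.
    by rewrite -Hr mulrA mulfV ?mul1r // pnatr_eq0 expn_eq0.
  have Hr0 : 0 <= r by rewrite invr_ge0 ler0n.
  have Hr1 : r <= 1 by rewrite invf_le1 ?ler1n ?ltr0n expn_gt0.
  rewrite Hr (eq_bigr (fun m => r + (a m)%:R * (1 - 2 * r))); last first.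
    move=> m _; have := leq_trans (Ha m) HK1.
    case: (a m) => [|[|//]] _.
      by rewrite sub0r normrN ger0_norm // mul0r addr0.
    by rewrite ger0_norm ?subr_ge0 //; ring.
  rewrite big_split /= sumr_const card_ord -mulr_suml -natr_sum Hs -[r *+ _]mulr_natl H2k.
  ring.
- have := all_eq_nat Hek Hs Ha HK => Heq.
  rewrite big1 // => m _; rewrite Heq.
  have -> : (2 ^ e)%N = (2 ^ k * 2 ^ (e - k))%N by rewrite -expnD subnKC.
  by rewrite natrM mulKf ?subrr ?normr0 // pnatr_eq0 expn_eq0.
Qed.


Lemma count_N (R : comRingType) n (e : nat) : (e <= n)%N ->
  (#|[set z : out n | #|erased z| == e]|)%:R = ('C(n, e) * 2 ^ (n - e))%:R :> R.
Proof.
move=> He.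
pose P : {poly R} := \sum_(z : out n) 'X^#|erased z|.
have HP : P = ((1 + 1)%:P + 'X) ^+ n.
  rewrite /P (eq_bigr (fun z : out n => \prod_(i < n) (if val (z i) == 2%N then 'X else 1)));
    last by move=> z _; rewrite prod_if expr1n mulr1.
  rewrite -(bigA_distr_bigA (fun (i : 'I_n) (j : 'I_3) => if val j == 2%N then 'X else 1 : {poly R})).
  rewrite prodr_const card_ord; congr (_ ^+ _).
  by rewrite !big_ord_recr big_ord0 /= add0r polyCD polyC1.
have H1 : P`_e = (#|[set z : out n | #|erased z| == e]|)%:R.
  rewrite /P coef_sum; under eq_bigr do rewrite coefXn.
  rewrite -sum1_card natr_sum [RHS]big_mkcond /=; apply: eq_bigr => z _.
  by rewrite inE eq_sym; case: (_ == _).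
rewrite -H1 HP exprDn coef_sum.
under eq_bigr do rewrite coefMn -rmorphXn coefCM coefXn.
rewrite (bigD1 (Ordinal (n := n.+1) (m := e) He)) //= big1; last first.
  move=> i Hi; have -> : (e == i) = false.
    by apply/negbTE; apply: contra Hi => /eqP Hei; apply/eqP/val_inj.
  by rewrite mulr0 mul0rn.
rewrite eqxx mulr1 addr0 natrM natrX -[_ *+ 'C(n, e)]mulr_natl (_ : (1 + 1 : R) = 2%:R) //.
Qed.

Lemma count_out (R : comRingType) n (G : nat -> R) :
  \sum_(z : out n) G #|erased z| =
  \sum_(e < n.+1) G e * ('C(n, e) * 2 ^ (n - e))%:R.
Proof.
transitivity (\sum_(z : out n) \sum_(e < n.+1) (#|erased z| == e)%:R * G e).
  apply: eq_bigr => z _.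
  have Hz : (#|erased z| < n.+1)%N by rewrite ltnS -[X in (_ <= X)%N]card_ord max_card.
  rewrite (bigD1 (Ordinal Hz)) //= eqxx mul1r big1 ?addr0 // => i Hi.
  have -> : (#|erased z| == i) = false.
    by apply/negbTE; apply: contra Hi => /eqP Hei; apply/eqP/val_inj.
  by rewrite mul0r.
rewrite exchange_big /=; apply: eq_bigr => e _.
rewrite -count_N; last by rewrite -ltnS.
rewrite mulrC -sum1_card natr_sum mulr_suml [RHS]big_mkcond /=.
apply: eq_bigr => z _; rewrite inE; case: (_ == _); by rewrite ?mul1r ?mul0r.
Qed.

Lemma sum_bool (R : ringType) (T : finType) (A : {set T}) (b : pred T) :
  \sum_(x in A) (b x)%:R = #|[set x in A | b x]|%:R :> R.
Proof.
rewrite -sum1_card natr_sum [LHS]big_mkcond [RHS]big_mkcond /=.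
by apply: eq_bigr => x _; rewrite inE; case: (x \in A); case: (b x).
Qed.

Lemma wz_ge0 (R : realFieldType) n (p : R) (z : out n) :
  0 <= p -> p <= 1 -> 0 <= wz p z.
Proof.
move=> H0 H1; apply: prodr_ge0 => i _; case: ifP => // _; by rewrite subr_ge0.
Qed.

Lemma wz_eq (R : comRingType) n (p : R) (z : out n) :
  wz p z = p ^+ #|erased z| * (1 - p) ^+ (n - #|erased z|).
Proof. by rewrite /wz prod_if. Qed.

Unset Implicit Arguments.
Theorem theorem2 (R : realFieldType) (p : R) (n k : nat)
    (C0 : {vspace 'rV['F_2]_n}) (enc : 'I_(2 ^ k) -> 'rV['F_2]_n) :
  0 <= p -> p < 1 -> (1 <= k)%N -> (k <= n)%N ->
  is_MDS k C0 ->
  (* messages are in bijection with the cosets of C0 via m |-> enc m + C0 *)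
  (forall x : 'rV['F_2]_n, exists! m : 'I_(2 ^ k), x \in coset C0 (enc m)) ->
  dTV_secrecy p C0 enc =
  \sum_(0 <= e < k) (1 - (2 ^ (k - e))%:R^-1) * ('C(n, e))%:R
                      * p ^+ e * (1 - p) ^+ (n - e).
Proof.
move=> Hp0 Hp1 Hk1 Hkn HM Hu.
set c := #|[set x : word n | x \in C0]|.
have Hc : (2 ^ k * c)%N = (2 ^ n)%N.
  have := coset_partition Hu predT.
  rewrite (eq_bigr (fun=> c)); last first.
    move=> m _; rewrite /c -(card_coset C0 (enc m)); apply: eq_card => x.
    by rewrite !inE andbT.
  rewrite sum_nat_const card_ord => ->.
  by rewrite cardsT card_mx card_Fp // mul1n.
pose a z m := #|[set x in coset C0 (enc m) | agree z x]|.
have HPMZ : forall m z, P_MZ p C0 enc m z =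
    (2 ^ k)%:R^-1 * (c%:R^-1 * wz p z * (a z m)%:R).
  move=> m z; rewrite /P_MZ card_coset; congr (_ * _).
  under eq_bigr do rewrite becn_eq.
  by rewrite -mulr_sumr -mulr_sumr sum_bool mulrA.
have Hs : forall z, (\sum_m a z m)%N = (2 ^ #|erased z|)%N.
  by move=> z; rewrite /a coset_partition // card_agree.
have HPZ : forall z, P_Z p C0 enc z =
    (2 ^ k)%:R^-1 * (c%:R^-1 * wz p z * (2 ^ #|erased z|)%:R).
  move=> z; rewrite /P_Z; under eq_bigr do rewrite HPMZ.
  by rewrite -mulr_sumr -mulr_sumr -natr_sum Hs.
have Hk0 : (2 ^ k)%:R != 0 :> R by rewrite pnatr_eq0 expn_eq0.
have Hc0 : c%:R != 0 :> R.
  rewrite pnatr_eq0; apply/eqP => Hc0; move: Hc; rewrite Hc0 muln0 => /esym/eqP.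
  by rewrite expn_eq0.
have Hterm : forall z, \sum_m `|P_MZ p C0 enc m z - (2 ^ k)%:R^-1 * P_Z p C0 enc z| =
   (2 ^ k)%:R^-1 * (c%:R^-1 * wz p z) *
   (if (#|erased z| < k)%N then 2 * (2 ^ #|erased z|)%:R * (1 - (2 ^ (k - #|erased z|))%:R^-1) else 0).
  move=> z; rewrite HPZ; set e := #|erased z|; set w := wz p z.
  have Hw : 0 <= (2 ^ k)%:R^-1 * (c%:R^-1 * w).
    by rewrite mulr_ge0 ?invr_ge0 ?ler0n // mulr_ge0 ?invr_ge0 ?ler0n // wz_ge0 // ltW.
  rewrite (eq_bigr (fun m => (2 ^ k)%:R^-1 * (c%:R^-1 * w) *
              `|(a z m)%:R - (2 ^ k)%:R^-1 * (2 ^ e)%:R|)); last first.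
    move=> m _; rewrite HPMZ -[X in X * `|_|]ger0_norm // -normrM; congr `|_|.
    rewrite /w; ring.
  rewrite -mulr_sumr.
  by rewrite (@sum_dist R k e (a z) #|Kset C0 (erased z)| (Hs z) (fun m => @a_le_K n C0 (enc m) z) (@K_bound n k C0 (erased z) HM)).
rewrite /dTV_secrecy exchange_big /=.
under eq_bigr do rewrite Hterm.
pose G e := (if (e < k)%N then (2 ^ e)%:R / (2 ^ n)%:R * (1 - (2 ^ (k - e))%:R^-1) else 0)
            * (p ^+ e * (1 - p) ^+ (n - e)) : R.
rewrite mulr_sumr (eq_bigr (fun z => G #|erased z|)); last first.
  move=> z _; rewrite /G wz_eq; case: ifP => _; last by rewrite !mulr0 mul0r.
  rewrite -Hc natrM; field.
  by rewrite Hc0 Hk0 pnatr_eq0 expn_eq0.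
rewrite count_out -(big_mkord xpredT (fun e => G e * ('C(n, e) * 2 ^ (n - e))%:R)).
rewrite (@big_cat_nat _ _ _ k 0 n.+1) /=; last by rewrite (leq_trans Hkn (leqnSn n)). 2: by [].
rewrite [X in _ + X]big1_seq ?addr0; last first.
  by move=> i; rewrite mem_index_iota => /and3P[_ Hi _]; rewrite /G ltnNge Hi /= !mul0r.
apply: eq_big_nat => e /andP[_ He]; rewrite /G He.
have -> : (2 ^ n)%N = (2 ^ e * 2 ^ (n - e))%N.
  by rewrite -expnD subnKC // ltnW // (leq_trans He Hkn).
rewrite !natrM; field.
by rewrite !pnatr_eq0 !expn_eq0.
Qed.
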